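(* Let $\mathbb{P}$ be a class of closed formulas that is closed under conjunction. Then every safety problem provable in $\mathbf{FI}^{\mathbb{P}}$ is provable in $\mathbf{F}^{\mathbb{P}}$.
   Context: A first-order vocabulary $\Sigma$ consists of constant, function and relation symbols; $\Sigma'=\{a' : a\in\Sigma\}$ is a disjoint copy, and for a formula $\varphi$ over $\Sigma$, $\varphi'$ denotes $\varphi$ with every symbol replaced by its primed copy. A safety problem is a triple $(\iota,\tau,\beta)$, where $\iota,\beta$ are closed formulas over $\Sigma$ and $\tau$ is a closed formula over $\Sigma\uplus\Sigma'$. $A\Rightarrow B$ means the implication $A\to B$ is valid. Proofs: a proof of $\Pi$ in a system is a finite tree whose nodes are safety problems, whose root is $\Pi$, and in which each node together with its children is an instance of one of the system's inference rules, with side conditions valid. Rules ($\varphi$ ranges over closed formulas over $\Sigma$): (Ind): no premises; conclusion $(\iota,\tau,\neg\varphi)$; side conditions $\iota\Rightarrow\varphi$ and $\varphi\wedge\tau\Rightarrow\varphi'$. (Cons): premise $(\iota,\tau,\neg\varphi)$; conclusion $(\iota,\tau,\beta)$; side condition $\varphi\Rightarrow\neg\beta$. (Inc): premises $(\iota,\tau,\neg\varphi)$ and $(\iota\wedge\varphi,\ \tau\wedge\varphi\wedge\varphi',\ \beta\wedge\varphi)$; conclusion $(\iota,\tau,\beta)$. $\mathbf{F}$ consists of (Ind) and (Cons); $\mathbf{FI}$ consists of (Ind), (Cons), (Inc). For a class of closed formulas $\mathbb{P}$, $\mathbf{F}^{\mathbb{P}}$ and $\mathbf{FI}^{\mathbb{P}}$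 restrict applications of (Ind) to $\varphi\in\mathbb{P}$. *)

(* Defs.v *)
From Stdlib Require Import List Arith.
Import ListNotations.
Set Implicit Arguments.

(* A vocabulary: function symbols (constants = arity 0) and relation symbols. *)
Record vocab := Vocab {
  fsym : Type;
  rsym : Type;
  far  : fsym -> nat;
  rar  : rsym -> nat }.

(* Sigma (+) Sigma' : inl = unprimed symbol a, inr = primed copy a'. *)
Definition dup (S : vocab) : vocab :=
  {| fsym := fsym S + fsym S; rsym := rsym S + rsym S;
     far := fun f => match f with inl g | inr g => far S g end;
     rar := fun r => match r with inl g | inr g => rar S g end |}.

Inductive term (S : vocab) : Type :=
| Var : nat -> term S
| App : fsym S -> list (term S) -> term S.

Inductive form (S : vocab) : Type :=
| FFalse : form S
| FTrue  : form S
| Atom   : rsym S -> list (term S) -> form S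
| Eq     : term S -> term S -> form S
| Not    : form S -> form S
| And    : form S -> form S -> form S
| Or     : form S -> form S -> form S
| Imp    : form S -> form S -> form S
| All    : nat -> form S -> form S
| Ex     : nat -> form S -> form S.

Arguments Var {S}. Arguments FFalse {S}. Arguments FTrue {S}.

Fixpoint term_wf S (t : term S) : Prop :=
  match t with
  | Var _ => True
  | App f ts => length ts = far S f /\
      (fix all (l : list (term S)) : Prop :=
         match l with nil => True | u :: l' => term_wf u /\ all l' end) ts
  end.

Fixpoint form_wf S (p : form S) : Prop :=
  match p with
  | FFalse | FTrue => True
  | Atom r ts => length ts = rar S r /\ Forall (@term_wf S) ts
  | Eq t u => term_wf t /\ term_wf u
  | Not a => form_wf a
  | And a b | Or a b | Imp a b => form_wf a /\ form_wf b
  | All _ a | Ex _ a => form_wf a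
  end.

Fixpoint term_fv S (t : term S) : list nat :=
  match t with
  | Var x => [x]
  | App _ ts => (fix fvs (l : list (term S)) : list nat :=
                   match l with nil => nil | u :: l' => term_fv u ++ fvs l' end) ts
  end.

Fixpoint form_fv S (p : form S) : list nat :=
  match p with
  | FFalse | FTrue => nil
  | Atom _ ts => flat_map (@term_fv S) ts
  | Eq t u => term_fv t ++ term_fv u
  | Not a => form_fv a
  | And a b | Or a b | Imp a b => form_fv a ++ form_fv b
  | All x a | Ex x a => remove Nat.eq_dec x (form_fv a)
  end.

Definition closed_form S (p : form S) : Prop := form_wf p /\ form_fv p = nil.

(* Semantics (Tarskian, arbitrary domains; nonemptiness is forced by the
   quantification over assignments). *)
Record structure (S : vocab) (D : Type) := Struct {
  ifun : fsym S -> list D -> D;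
  irel : rsym S -> list D -> Prop }.

Definition upd D (rho : nat -> D) (x : nat) (d : D) : nat -> D :=
  fun y => if Nat.eqb y x then d else rho y.

Fixpoint teval S D (M : structure S D) (rho : nat -> D) (t : term S) : D :=
  match t with
  | Var x => rho x
  | App f ts => ifun M f ((fix ev (l : list (term S)) : list D :=
                   match l with nil => nil | u :: l' => teval M rho u :: ev l' end) ts)
  end.

Fixpoint sat S D (M : structure S D) (rho : nat -> D) (p : form S) : Prop :=
  match p with
  | FFalse => False
  | FTrue => True
  | Atom r ts => irel M r (map (teval M rho) ts)
  | Eq t u => teval M rho t = teval M rho u
  | Not a => ~ sat M rho a
  | And a b => sat M rho a /\ sat M rho b
  | Or a b => sat M rho a \/ sat M rho b
  | Imp a b => sat M rho a -> sat M rho b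
  | All x a => forall d : D, sat M (upd rho x d) a
  | Ex x a => exists d : D, sat M (upd rho x d) a
  end.

Definition valid S (p : form S) : Prop :=
  forall (D : Type) (M : structure S D) (rho : nat -> D), sat M rho p.

Definition entails S (a b : form S) : Prop := valid (Imp a b).

Fixpoint term_ren S S' (f : fsym S -> fsym S') (t : term S) : term S' :=
  match t with
  | Var x => Var x
  | App g ts => App (f g) ((fix rn (l : list (term S)) : list (term S') :=
                   match l with nil => nil | u :: l' => @term_ren S S' f u :: rn l' end) ts)
  end.

Fixpoint form_ren S S' (f : fsym S -> fsym S') (g : rsym S -> rsym S')
         (p : form S) : form S' :=
  match p with
  | FFalse => FFalse
  | FTrue => FTrue
  | Atom r ts => Atom (g r) (map (@term_ren S S' f) ts)
  | Eq t u => Eq (@term_ren S S' f t) (@term_ren S S' f u)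
  | Not a => Not (@form_ren S S' f g a)
  | And a b => And (@form_ren S S' f g a) (@form_ren S S' f g b)
  | Or a b => Or (@form_ren S S' f g a) (@form_ren S S' f g b)
  | Imp a b => Imp (@form_ren S S' f g a) (@form_ren S S' f g b)
  | All x a => All x (@form_ren S S' f g a)
  | Ex x a => Ex x (@form_ren S S' f g a)
  end.

Definition unprimed S (p : form S) : form (dup S) :=
  @form_ren S (dup S) inl inl p.
Definition primed S (p : form S) : form (dup S) :=
  @form_ren S (dup S) inr inr p.

Record problem (S : vocab) := Problem {
  init  : form S;
  trans : form (dup S);
  bad   : form S }.

Definition safety_problem S (Pi : problem S) : Prop :=
  closed_form (init Pi) /\ closed_form (trans Pi) /\ closed_form (bad Pi).

(* Provability (finite proof trees, as an inductive derivability relation).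
   [withInc = false] gives F^P, [withInc = true] gives FI^P; applications of
   (Ind) are restricted to phi in P. *)
Inductive provable S (P : form S -> Prop) (withInc : bool) : problem S -> Prop :=
| rule_Ind : forall (iota : form S) (tau : form (dup S)) (phi : form S),
    closed_form phi -> P phi ->
    entails iota phi ->
    entails (And (unprimed phi) tau) (primed phi) ->
    provable P withInc (Problem iota tau (Not phi))
| rule_Cons : forall (iota : form S) (tau : form (dup S)) (beta phi : form S),
    closed_form phi ->
    provable P withInc (Problem iota tau (Not phi)) ->
    entails phi (Not beta) ->
    provable P withInc (Problem iota tau beta)
| rule_Inc : forall (iota : form S) (tau : form (dup S)) (beta phi : form S),
    withInc = true ->
    closed_form phi ->
    provable P withInc (Problem iota tau (Not phi)) ->
    provable P withInc
      (Problem (And iota phi) (And tau (And (unprimed phi) (primed phi)))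
               (And beta phi)) ->
    provable P withInc (Problem iota tau beta).

Definition provable_F S (P : form S -> Prop) := provable P false.
Definition provable_FI S (P : form S -> Prop) := provable P true.

(* Main.v *)
Require Import Defs.
From Stdlib Require Import List Classical.
Import ListNotations.
Set Implicit Arguments.
Unset Strict Implicit.

Definition restr S S' (f : fsym S -> fsym S') (g : rsym S -> rsym S') D
  (M : structure S' D) : structure S D :=
  @Struct S D (fun h => ifun M (f h)) (fun r => irel M (g r)).

Fixpoint teval_ren S S' (f : fsym S -> fsym S') (g : rsym S -> rsym S') D
  (M : structure S' D) rho (t : term S) {struct t} :
  teval M rho (@term_ren S S' f t) = teval (restr f g M) rho t :=
  match t with
  | Var x => eq_refl
  | App h ts => f_equal (ifun M (f h))
      ((fix go (l : list (term S)) :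
          (fix ev (l : list (term S')) : list D :=
                   match l with nil => nil | u :: l' => teval M rho u :: ev l' end)
          ((fix rn (l : list (term S)) : list (term S') :=
                   match l with nil => nil | u :: l' => @term_ren S S' f u :: rn l' end) l)
          = (fix ev (l : list (term S)) : list D :=
                   match l with nil => nil | u :: l' => teval (restr f g M) rho u :: ev l' end) l
        := match l with
           | nil => eq_refl
           | u :: l' => f_equal2 cons (teval_ren f g M rho u) (go l')
           end) ts)
  end.

Lemma sat_ren S S' (f : fsym S -> fsym S') (g : rsym S -> rsym S') D
  (M : structure S' D) (p : form S) : forall rho,
  sat M rho (@form_ren S S' f g p) <-> sat (restr f g M) rho p.
Proof.
  induction p; intros rho; simpl; try tauto.
  - rewrite map_map. erewrite map_ext; [reflexivity|]. intro a; apply (teval_ren f g).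
  - rewrite !(teval_ren f g); tauto.
  - rewrite IHp; tauto.
  - rewrite IHp1, IHp2; tauto.
  - rewrite IHp1, IHp2; tauto.
  - rewrite IHp1, IHp2; tauto.
  - split; intros H d; apply IHp; auto.
  - split; intros [d H]; exists d; apply IHp; auto.
Qed.

Definition Fchar S (P : form S -> Prop) (Pi : problem S) : Prop :=
  exists psi, P psi /\ entails (init Pi) psi /\
    entails (And (unprimed psi) (trans Pi)) (primed psi) /\
    entails psi (Not (bad Pi)).

Lemma char_of S (P : form S -> Prop)
  (HPconj : forall phi psi, P phi -> P psi -> P (And phi psi)) b Pi : provable P b Pi -> Fchar P Pi.
Proof.
  induction 1 as [iota tau phi Hc HP H1 H2|iota tau beta phi Hc Hp [psi [HP [H1 [H2 H3]]]] H4
    |iota tau beta phi Hb Hc Hp1 [psi1 [HP1 [H11 [H12 H13]]]] Hp2 [psi2 [HP2 [H21 [H22 H23]]]]].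
  - exists phi; repeat split; auto. intros D M rho; simpl; tauto.
  - exists psi; repeat split; auto. intros D M rho Hs. simpl in *.
    intro Hb. apply (H3 D M rho Hs). intro Hf. exact (H4 D M rho Hf Hb).
  - exists (And psi1 psi2). split; [|split; [|split]].
    + apply HPconj; auto.
    + intros D M rho Hi; simpl in *.
      assert (Hp : sat M rho psi1) by (apply (H11 D M rho Hi)).
      assert (Hf : sat M rho phi).
      { destruct (classic (sat M rho phi)); auto. exfalso. apply (H13 D M rho Hp); auto. }
      split; auto. apply (H21 D M rho). simpl; auto.
    + intros D M rho Hi; simpl in *.
      destruct Hi as [[Hp Hq] Ht].
      assert (Hp' : sat M rho (primed psi1)) by (apply (H12 D M rho); simpl; auto).
      assert (Hf : forall D (M : structure S D) rho, sat M rho psi1 -> sat M rho phi).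
      { intros D0 M0 r0 H0. destruct (classic (sat M0 r0 phi)); auto. exfalso. apply (H13 D0 M0 r0 H0); auto. }
      split; auto.
      apply (H22 D M rho). simpl. repeat split; auto.
      * unfold unprimed. apply sat_ren in Hp. apply sat_ren. apply Hf. exact Hp.
      * unfold primed. unfold primed in Hp'. apply sat_ren in Hp'. apply sat_ren. apply Hf. exact Hp'.
    + intros D M rho [Hp Hq]; simpl in *. intro Hbb.
      assert (Hf : sat M rho phi).
      { destruct (classic (sat M rho phi)); auto. exfalso. apply (H13 D M rho Hp); auto. }
      apply (H23 D M rho Hq). simpl; auto.
Qed.

Theorem corollary4p8 (S : vocab) (P : form S -> Prop)
  (HPclosed : forall phi, P phi -> closed_form phi)
  (HPconj : forall phi psi, P phi -> P psi -> P (And phi psi))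
  (Pi : problem S) :
  safety_problem Pi -> provable_FI P Pi -> provable_F P Pi.
Proof.
  intros _ H. destruct (char_of HPconj H) as [psi [HP [H1 [H2 H3]]]].
  destruct Pi as [iota tau beta]; simpl in *.
  apply (@rule_Cons S P false iota tau beta psi).
  - auto.
  - apply rule_Ind; auto.
  - intros D M rho Hp Hn. exact (H3 D M rho Hp Hn).
Qed.
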